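(* Let $L\ge 2$ and let $M_1,\dots,M_L$ be pairwise distinct positive integers. Let $N$ be an integer with $0\le N<\operatorname{lcm}(M_1,\dots,M_L)$, and for $1\le i\le L$ let $r_i\in\{0,\dots,M_i-1\}$ be the remainder of $N$ modulo $M_i$ and $n_i=(N-r_i)/M_i$ the corresponding folding number. Let $\tilde r_1,\dots,\tilde r_L$ be integers with $0\le\tilde r_i\le M_i-1$ (erroneous remainders) and put $\Delta r_i=\tilde r_i-r_i$. Run the single-stage algorithm (described in the context) on the moduli $M_1,\dots,M_L$ with reference index $k=1$ and inputs $\tilde r_1,\dots,\tilde r_L$, producing $\hat n_1,\dots,\hat n_L$. Then $\hat n_i=n_i$ for all $1\le i\le L$ if and only if $$-\frac{\gcd(M_1,M_i)}{2}\le \Delta r_i-\Delta r_1<\frac{\gcd(M_1,M_i)}{2}\quad\text{for all }2\le i\le L.$$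
   Context: For $x\in\mathbb R$, $[x]$ denotes the unique integer with $-1/2\le x-[x]<1/2$. Single-stage algorithm: let $P_1,\dots,P_m$ ($m\ge2$) be pairwise distinct positive integers, $k\in\{1,\dots,m\}$ a reference index, and $x_1,\dots,x_m$ integers. For each $i\ne k$ put $m_{ki}=\gcd(P_k,P_i)$, $\Gamma_{ki}=P_k/m_{ki}$, $\Gamma_{ik}=P_i/m_{ki}$, $\hat q_{ik}=[(x_i-x_k)/m_{ki}]$; let $\bar\Gamma_{ki}$ be a multiplicative inverse of $\Gamma_{ki}$ modulo $\Gamma_{ik}$, and let $\hat\xi_{ik}\in\{0,\dots,\Gamma_{ik}-1\}$ with $\hat\xi_{ik}\equiv\hat q_{ik}\bar\Gamma_{ki}\pmod{\Gamma_{ik}}$. Let $\hat n_k$ be the least nonnegative integer $y$ with $y\equiv\hat\xi_{ik}\pmod{\Gamma_{ik}}$ for all $i\ne k$ (if no such $y$ exists the algorithm fails and its outputs are regarded as not equal to any target values). For $i\ne k$ set $\hat n_i=(\hat n_k\Gamma_{ki}-\hat q_{ik})/\Gamma_{ik}$. Outputs: $\hat n_1,\dots,\hat n_m$ and the estimate $[\frac1m\sum_{i=1}^m(\hat n_iP_i+x_i)]$. *)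

(* Defs.v *)
From mathcomp Require Import all_boot all_order all_algebra.
Set Implicit Arguments. Unset Strict Implicit. Unset Printing Implicit Defensive.
Import Order.TTheory GRing.Theory Num.Theory.
Local Open Scope ring_scope.

(* [x] : the unique integer with -1/2 <= x - [x] < 1/2, i.e. floor (x + 1/2). *)
Definition rnd (x : rat) : int := Num.floor (x + 1 / 2).

(* Single-stage algorithm.  Indices are 0..m-1 (paper: 1..m); P, x : nat -> _.
   k is the reference index. *)
Section Alg.
Variables (P : nat -> nat) (x : nat -> int) (k : nat).

Definition m_ki (i : nat) : nat := gcdn (P k) (P i).
Definition G_ki (i : nat) : nat := (P k %/ m_ki i)%N.
Definition G_ik (i : nat) : nat := (P i %/ m_ki i)%N.
Definition qhat (i : nat) : int := rnd ((x i - x k)%:~R / (m_ki i)%:R).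
(* a multiplicative inverse of G_ki modulo G_ik (Bezout coefficient) *)
Definition Gbar_ki (i : nat) : int := (egcdz (G_ki i) (G_ik i)).1.
Definition xihat (i : nat) : int := ((qhat i * Gbar_ki i) %% (G_ik i)%:Z)%Z.

Definition crt_sol (m : nat) (y : nat) : Prop :=
  forall i, (i < m)%N -> i != k -> (y%:Z = xihat i %[mod (G_ik i)%:Z])%Z.

Definition least_sol (m : nat) (y : nat) : Prop :=
  crt_sol m y /\ forall y', crt_sol m y' -> (y <= y')%N.

Definition alg_outputs_eq (m : nat) (n : nat -> int) : Prop :=
  exists y : nat, least_sol m y /\ n k = y%:Z /\
    forall i, (i < m)%N -> i != k ->
      (n i)%:~R = ((y%:Z * (G_ki i)%:Z - qhat i)%:~R / (G_ik i)%:R : rat).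
End Alg.

(* Main.v *)
Require Import Defs.
From mathcomp Require Import all_boot all_order all_algebra zify ring lra.
Import Order.TTheory GRing.Theory Num.Theory.
Local Open Scope ring_scope.

Lemma rnd_eq (q d : int) (g : nat) : (0 < g)%N ->
  (rnd ((q * g%:Z + d)%:~R / g%:R) = q) <->
  (- (g%:R / 2) <= d%:~R :> rat /\ d%:~R < (g%:R / 2) :> rat).
Proof.
move=> g0. have gp : 0 < (g%:R : rat) by rewrite ltr0n.
have gn : (g%:R : rat) != 0 by rewrite lt0r_neq0.
set t : rat := d%:~R / g%:R.
have dt : (d%:~R : rat) = t * g%:R by rewrite /t mulfVK.
have E : ((q * g%:Z + d)%:~R / g%:R : rat) = q%:~R + t.
  rewrite intrD intrM /t mulrDl.
  have -> : ((Posz g)%:~R : rat) = g%:R by [].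
  by rewrite mulfK.
rewrite /rnd E dt.
have o : (1%:~R : rat) = 1 by [].
split.
- move/eqP; rewrite floor_eq intrD o => /andP [h1 h2]; split; nra.
- move=> [h1 h2]; apply/eqP; rewrite floor_eq intrD o; apply/andP; split; nra.
Qed.

Lemma per_i (M : nat -> nat) (rt : nat -> nat) (N i : nat) :
  (0 < M 0)%N -> (0 < M i)%N ->
  let g := m_ki M 0 i in let Gk := G_ki M 0 i in let Gi := G_ik M 0 i in
  let q := (N %/ M 0)%:Z * Gk%:Z - (N %/ M i)%:Z * Gi%:Z in
  let dr := fun j => (rt j)%:Z - (N %% M j)%:Z in
  [/\ (0 < Gi)%N, (0 < g)%N, M 0 = (Gk*g)%N /\ M i = (Gi*g)%N,
      gcdn Gk Gi = 1%N &
      (qhat M (fun j => (rt j)%:Z) 0 i = q <->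
       (- ((gcdn (M 0%N) (M i))%:R / 2) <= (dr i - dr 0%N)%:~R :> rat /\
       (dr i - dr 0%N)%:~R < ((gcdn (M 0%N) (M i))%:R / 2) :> rat))].
Proof.
move=> h0 hi g Gk Gi q dr.
have gp : (0 < g)%N by rewrite /g /m_ki gcdn_gt0 h0.
have e0 : M 0 = (Gk * g)%N by rewrite /Gk /G_ki -/(m_ki M 0 i) -/g divnK // /g /m_ki dvdn_gcdl.
have ei : M i = (Gi * g)%N by rewrite /Gi /G_ik -/(m_ki M 0 i) -/g divnK // /g /m_ki dvdn_gcdr.
have Gip : (0 < Gi)%N by move: hi; rewrite ei muln_gt0 => /andP[].
have cop : gcdn Gk Gi = 1%N.
  have : (gcdn Gk Gi * g = g)%N by rewrite muln_gcdl -e0 -ei.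
  by move/eqP; rewrite -{2}[g]mul1n eqn_mul2r eqn0Ngt gp /= => /eqP.
split => //.
have dN0 := divn_eq N (M 0). have dNi := divn_eq N (M i).
have hq : q * g%:Z = (N %% M i)%:Z - (N %% M 0)%:Z.
  move: dN0 dNi; rewrite /q.
  move: (N %/ M 0)%N (N %/ M i)%N (N %% M 0)%N (N %% M i)%N => a b r0 ri.
  rewrite e0 ei => E1 E2; clearbody g Gk Gi q dr.
  suff: ((a%:Z * Gk%:Z - b%:Z * Gi%:Z) * g%:Z = ri%:Z - r0%:Z :> int) by [].
  lia.
have -> : qhat M (fun j => (rt j)%:Z) 0 i =
  rnd ((q * g%:Z + (dr i - dr 0))%:~R / g%:R).
  rewrite /qhat /= -/g; congr (rnd (_ / _)); congr (_%:~R).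
  rewrite /dr /= hq; ring.
exact: rnd_eq.
Qed.

Theorem theorem1 (L : nat) (M : nat -> nat) (N : nat) (rt : nat -> nat) :
  (2 <= L)%N ->
  (forall i, (i < L)%N -> (0 < M i)%N) ->
  (forall i j, (i < L)%N -> (j < L)%N -> i != j -> M i != M j) ->
  (N < \big[lcmn/1%N]_(i < L) M i)%N ->
  (forall i, (i < L)%N -> (rt i < M i)%N) ->
  let r := fun i => (N %% M i)%N in
  let n := fun i => ((N%:Z - (r i)%:Z) %/ (M i)%:Z)%Z in
  let dr := fun i => (rt i)%:Z - (r i)%:Z in
  alg_outputs_eq M (fun i => (rt i)%:Z) 0 L n <->
  (forall i, (1 <= i < L)%N ->
     - ((gcdn (M 0%N) (M i))%:R / 2) <= (dr i - dr 0%N)%:~R :> rat /\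
     (dr i - dr 0%N)%:~R < ((gcdn (M 0%N) (M i))%:R / 2) :> rat).
Proof.
move=> HL Hpos Hdist Hlcm Hrt r n dr.
have L0 : (0 < L)%N by apply: leq_trans HL.
have M0p := Hpos 0%N L0.
have hn : forall i, (i < L)%N -> n i = (N %/ M i)%:Z.
  move=> i iL; rewrite /n /r.
  have -> : (N%:Z - (N %% M i)%:Z) = (N %/ M i)%:Z * (M i)%:Z.
    rewrite {1}(divn_eq N (M i)) PoszD PoszM; ring.
  by rewrite mulzK // eqz_nat -lt0n Hpos.
set a := (N %/ M 0)%N.
split.
- move=> [y [[hcrt hmin] [hn0 hni]]] i /andP [i1 iL].
  have ine : i != 0%N by rewrite -lt0n.
  have [Gip gp [e0 ei] cop hq] := per_i M rt N i (Hpos 0%N L0) (Hpos i iL).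
  apply/hq.
  have := hni i iL ine. rewrite hn // -hn0 hn // => h.
  have h2 : (((N %/ M i)%:Z * (G_ik M 0 i)%:Z)%:~R : rat) =
     ((a%:Z * (G_ki M 0 i)%:Z - qhat M (fun j => (rt j)%:Z) 0 i)%:~R).
    rewrite intrM h.
    have -> : (((G_ik M 0 i)%:Z)%:~R : rat) = (G_ik M 0 i)%:R by [].
    by rewrite mulfVK // pnatr_eq0 -lt0n.
  move/eqP: h2; rewrite eqr_int => /eqP h3.
  rewrite h3; ring.
- move=> Hc.
  have cr : crt_sol M (fun j => (rt j)%:Z) 0 L a.
    move=> i iL ine.
    have i1 : (1 <= i < L)%N by rewrite iL andbT lt0n.
    have [Gip gp [e0 ei] cop hq] := per_i M rt N i (Hpos 0%N L0) (Hpos i iL).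
    rewrite /xihat (proj2 hq (Hc i i1)) /Gbar_ki.
    case: egcdzP => u v huv _ /=.
    have g1 : gcdz (G_ki M 0 i) (G_ik M 0 i) = 1 by rewrite /gcdz /= cop.
    rewrite g1 in huv.
    rewrite modz_mod; apply/eqP; rewrite eqz_mod_dvd.
    set Gk := (G_ki M 0 i)%:Z in huv *. set Gi := (G_ik M 0 i)%:Z in huv *.
    set b := (N %/ M i)%:Z.
    have -> : a%:Z - (a%:Z * Gk - b * Gi) * u = Gi * (a%:Z * v + b * u) + a%:Z * (1 - (u * Gk + v * Gi)) by ring.
    by rewrite huv subrr mulr0 addr0 dvdz_mulr.
  exists a; split; [split => // | split; first exact: hn].
    move=> y' hy'; rewrite leqNgt; apply/negP => lt.
    set D := (a - y')%N.
    have Dp : (0 < D)%N by rewrite subn_gt0.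
    have hdiv : (\big[lcmn/1%N]_(i < L) M i %| D * M 0)%N.
      apply/dvdn_biglcmP => j _.
      have [j0|jne] := eqVneq (nat_of_ord j) 0%N.
        by rewrite j0 dvdn_mull.
      have jL := ltn_ord j.
      have [Gip gp [e0 ei] cop hq] := per_i M rt N j (Hpos 0%N L0) (Hpos j jL).
      have h1 := hy' j jL jne. have h2 := cr j jL jne.
      have : (a%:Z = y'%:Z %[mod (G_ik M 0 j)%:Z])%Z by rewrite h1 h2.
      move/eqP; rewrite eqz_mod_dvd subzn; last exact: ltnW.
      move=> hd.
      rewrite ei e0 mulnA dvdn_mul //.
      by apply: dvdn_mulr.
    have pos : (0 < D * M 0)%N by rewrite muln_gt0 Dp M0p.
    have hle := dvdn_leq pos hdiv.
    have : (D * M 0 <= N)%N.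
      apply: leq_trans (leq_trunc_div N (M 0)).
      by rewrite leq_mul2r leq_subr orbT.
    move=> h; move: (leq_trans hle h); rewrite leqNgt Hlcm //.
  move=> i iL ine.
  have i1 : (1 <= i < L)%N by rewrite iL andbT lt0n.
  have [Gip gp [e0 ei] cop hq] := per_i M rt N i (Hpos 0%N L0) (Hpos i iL).
  rewrite (proj2 hq (Hc i i1)) hn //.
  have -> : (a%:Z * (G_ki M 0 i)%:Z - ((N %/ M 0)%:Z * (G_ki M 0 i)%:Z - (N %/ M i)%:Z * (G_ik M 0 i)%:Z))
     = (N %/ M i)%:Z * (G_ik M 0 i)%:Z by rewrite /a; ring.
  rewrite intrM.
  have -> : (((G_ik M 0 i)%:Z)%:~R : rat) = (G_ik M 0 i)%:R by [].
  by rewrite mulfK // pnatr_eq0 -lt0n.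
Qed.
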